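(* Let $H$ be a bipartite graph with vertex classes $A_1$, $A_2$, where $|A_1|=n_1$, $|A_2|=n_2$, every vertex of $A_1$ has degree $d_1$ and every vertex of $A_2$ has degree $d_2$. Suppose that $d_2 \ge \log(2n_2)$. Then $H$ contains a subgraph which is a union of vertex-disjoint stars with centers in $A_1$, each star having at least $\frac{d_1}{4 \log (2n_2)}$ leaves, such that every vertex of $A_2$ is a leaf of one of these stars.
   Context: Here $\log$ denotes the natural logarithm. *)

(* Defs.v *)
From HB Require Import structures.
From mathcomp Require Import all_boot all_order all_algebra.
From mathcomp Require Import all_classical all_reals all_analysis.
Set Implicit Arguments. Unset Strict Implicit. Unset Printing Implicit Defensive.
Import Order.TTheory GRing.Theory Num.Theory.
Local Open Scope ring_scope.

(* A spanning-on-A2 union of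
   vertex-disjoint stars with centres in A1 is encoded by the map
   f : T2 -> T1 sending each vertex of A2 to the centre of the star in which
   it is a leaf: the star centred at a has leaf set f^-1(a), its edges
   {f b, b} must be edges of H, and stars are vertex-disjoint since f is a
   function and centres/leaves lie in different classes. *)
Definition star_cover (R : realType) (T1 T2 : finType)
  (E : T1 -> T2 -> bool) (k : R) (f : T2 -> T1) : Prop :=
  (forall b : T2, E (f b) b) /\
  (forall a : T1, (exists b : T2, f b = a) ->
     k <= (#|[set b : T2 | f b == a]|)%:R).

(* Main.v *)
Require Import Defs.
From HB Require Import structures.
From mathcomp Require Import all_boot all_order all_algebra.
From mathcomp Require Import all_classical all_reals all_analysis.
Import Order.TTheory GRing.Theory Num.Theory.
Local Open Scope ring_scope.
From mathcomp Require Import zify ring lra.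


Local Open Scope nat_scope.

Definition NC (X Y : finType) (r : X -> Y -> bool) (C : {set Y}) (B : {set X}) : {set Y} :=
  [set y in C | [exists x in B, r x y]].
Arguments NC {X Y} r C B.

Lemma hall (X Y : finType) (r : X -> Y -> bool) (y0 : Y) (A : {set X}) (C : {set Y}) :
  (forall B : {set X}, B \subset A -> #|B| <= #|NC r C B|) ->
  exists g : X -> Y, {in A &, injective g} /\ {in A, forall x, r x (g x) && (g x \in C)}.
Proof.
have [n] := ubnP #|A|; elim: n A C => // n IH A C ltAn hA.
case: (set_0Vmem A) => [->|[x0 x0A]].
  by exists (fun _ => y0); split => [x y|x]; rewrite inE.
have [/existsP [B /andP[pBA /andP[nB0 /eqP tB]]] | hnot] :=
  boolP [exists B : {set X}, [&& B \proper A, B != finset.set0 & #|NC r C B| == #|B|]].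
-
  have sBA := proper_sub pBA.
  have ltB : #|B| < n.
    by apply: leq_trans (proper_card pBA) _; rewrite -ltnS.
  have [g1 [inj1 P1]] := IH B C ltB (fun B' sB' => hA B' (fintype.subset_trans sB' sBA)).
  set A' := A :\: B; set C' := C :\: NC r C B.
  have ltA' : #|A'| < n.
    suff : #|A'| < #|A| by lia.
    rewrite /A'.
    have := cardsID B A; have : 0 < #|A :&: B|.
      case/set0Pn: nB0 => x xB; apply/card_gt0P; exists x; by rewrite inE xB (fintype.subsetP sBA).
    lia.
  have hA' : forall B' : {set X}, B' \subset A' -> #|B'| <= #|NC r C' B'|.
    move=> B' sB'.
    have dBB' : [disjoint B & B'].
      rewrite -setI_eq0; apply/eqP/setP => x; rewrite !inE.
      apply/negbTE/negP => /andP[xB xB']; move: (fintype.subsetP sB' x xB'); by rewrite !inE xB.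
    have sU : B :|: B' \subset A.
      rewrite finset.subUset sBA /=; apply: fintype.subset_trans sB' _; exact: subsetDl.
    have h1 := hA _ sU.
    rewrite cardsU (disjoint_setI0 dBB') cards0 subn0 in h1.
    have sN : NC r C (B :|: B') \subset NC r C B :|: NC r C' B'.
      apply/fintype.subsetP => y; rewrite !inE => /andP[yC /existsP[x /andP[]]].
      rewrite inE => /orP[xB|xB'] rxy.
        have yN : [exists x0 in B, r x0 y] by apply/existsP; exists x; rewrite xB.
        by rewrite yC yN.
      case yN: [exists x0 in B, r x0 y]; first by rewrite yC.
      rewrite yC /=; apply/existsP; exists x; by rewrite xB' rxy.
    have := subset_leq_card sN; rewrite cardsU tB; lia.
  have [g2 [inj2 P2]] := IH A' C' ltA' hA'.
  exists (fun x => if x \in B then g1 x else g2 x); split.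
  + move=> x y xA yA /=.
    case xB: (x \in B); case yB: (y \in B).
    * exact: inj1.
    * move=> e; exfalso.
      have yA' : y \in A' by rewrite inE yB yA.
      have := P2 y yA'; rewrite -e inE => /andP[_ /andP[/negP nN _]]; apply: nN.
      have /andP[r1 c1] := P1 x xB.
      by rewrite inE c1; apply/existsP; exists x; rewrite xB.
    * move=> e; exfalso.
      have xA' : x \in A' by rewrite inE xB xA.
      have := P2 x xA'; rewrite e inE => /andP[_ /andP[/negP nN _]]; apply: nN.
      have /andP[r1 c1] := P1 y yB.
      by rewrite inE c1; apply/existsP; exists y; rewrite yB.
    * apply: inj2; by rewrite inE ?xB ?yB ?xA ?yA.
  + move=> x xA /=; case xB: (x \in B); first exact: P1.
    have xA' : x \in A' by rewrite inE xB xA.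
    have /andP[-> ] := P2 x xA'; by rewrite inE => /andP[_ ->].
-
  have h1 := hA [set x0]; rewrite finset.sub1set x0A cards1 in h1.
  have /card_gt0P [y1] := h1 isT.
  rewrite inE => /andP[y1C /existsP[x /andP[]]]; rewrite inE => /eqP -> rx0y1; clear x.
  set A' := A :\ x0; set C' := C :\ y1.
  have ltA' : #|A'| < n.
    suff : #|A'| < #|A| by lia.
    rewrite /A' (cardsD1 x0 A) x0A; lia.
  have hA' : forall B' : {set X}, B' \subset A' -> #|B'| <= #|NC r C' B'|.
    move=> B' sB'.
    case: (set_0Vmem B') => [->|[x1 x1B']]; first by rewrite cards0.
    have sBA : B' \subset A by apply: fintype.subset_trans sB' _; exact: subD1set.
    have pBA : B' \proper A.
      rewrite properE sBA /=; apply/subsetPn; exists x0 => //.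
      by apply/negP => /(fintype.subsetP sB'); rewrite !inE eqxx.
    have nB0 : B' != finset.set0 by apply/set0Pn; exists x1.
    have hs : #|B'| < #|NC r C B'|.
      rewrite ltn_neqAle hA // andbT.
      apply/negP => /eqP e; move/negP: hnot; apply; apply/existsP; exists B'.
      by rewrite pBA nB0 e eqxx.
    have sN : NC r C B' \subset y1 |: NC r C' B'.
      apply/fintype.subsetP => y; rewrite !inE => /andP[yC ex].
      by case: (y == y1) => //=; rewrite yC.
    have := subset_leq_card sN; rewrite cardsU1; lia.
  have [g2 [inj2 P2]] := IH A' C' ltA' hA'.
  exists (fun x => if x == x0 then y1 else g2 x); split.
  + move=> x y xA yA /=.
    case: (eqVneq x x0) => [->|nx]; case: (eqVneq y x0) => [->|ny] //.
    * move=> e; exfalso.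
      have yA' : y \in A' by rewrite !inE ny yA.
      by have := P2 y yA'; rewrite -e !inE eqxx andbF.
    * move=> e; exfalso.
      have xA' : x \in A' by rewrite !inE nx xA.
      by have := P2 x xA'; rewrite e !inE eqxx andbF.
    * apply: inj2; by rewrite !inE ?nx ?ny ?xA ?yA.
  + move=> x xA /=; case: (eqVneq x x0) => [->|nx]; first by rewrite rx0y1 y1C.
    have xA' : x \in A' by rewrite !inE nx xA.
    have /andP[-> ] := P2 x xA'; by rewrite !inE => /andP[_ ->].
Qed.


Lemma count_hall (T1 T2 : finType) (E : T1 -> T2 -> bool) (d1 D K : nat)
  (S U P : {set T1}) :
  (forall a, #|[set b | E a b]| = d1) ->
  (forall b, #|[set a in S | E a b]| <= D) ->
  0 < D -> (K.-1 * D < d1) ->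
  U \subset S ->
  (forall u, u \in U -> exists b, E u b && [forall a in U, E a b ==> (a == u)]) ->
  P \subset U -> K * #|P| <= #|[set b | [exists a in P, E a b]]|.
Proof.
move=> hd1 hD D0 hK sUS priv sPU.
set N := [set b | [exists a in P, E a b]].
set Q := [set b in N | #|[set a in P | E a b]| <= 1].
have edges : d1 * #|P| = \sum_b #|[set a in P | E a b]|.
  transitivity (\sum_(a in P) \sum_b (E a b : nat)).
    rewrite mulnC -sum_nat_const; apply: eq_bigr => a _.
    rewrite -(hd1 a) -sum1_card big_mkcond /=; apply: eq_bigr => b _.
    by rewrite inE; case: (E a b).
  rewrite exchange_big /=; apply: eq_bigr => b _.
  rewrite -sum1_card big_mkcond [RHS]big_mkcond /=; apply: eq_bigr => a _.
  by rewrite inE; case: (a \in P); case: (E a b).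
have bound : \sum_b (#|[set a in P | E a b]| + (D.-1) * (b \in Q)) <= \sum_b D * (b \in N).
  apply: leq_sum => b _.
  case bN: (b \in N); last first.
    have -> : b \in Q = false by rewrite inE bN.
    have -> : [set a in P | E a b] = finset.set0.
      apply/setP => a; rewrite !inE; apply/negbTE/negP => /andP[aP eab].
      have : b \in N by rewrite inE; apply/existsP; exists a; rewrite aP.
      by rewrite bN.
    by rewrite cards0 !muln0.
  case bQ: (b \in Q).
    move: bQ; rewrite inE bN /= => h; lia.
  rewrite muln0 addn0 muln1.
  apply: leq_trans (hD b); apply: subset_leq_card; apply/fintype.subsetP => a.
  rewrite !inE => /andP[aP ->]; by rewrite (fintype.subsetP sUS) ?(fintype.subsetP sPU).
rewrite big_split /= -edges -big_distrr /= -big_distrr /= in bound.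
have sumQ : \sum_b (b \in Q : nat) = #|Q|.
  by rewrite -sum1_card [RHS]big_mkcond /=; apply: eq_bigr => b _; case: (b \in Q).
have sumN : \sum_b (b \in N : nat) = #|N|.
  by rewrite -sum1_card [RHS]big_mkcond /=; apply: eq_bigr => b _; case: (b \in N).
rewrite sumQ sumN in bound.
have PQ : #|P| <= #|Q|.
  case: (set_0Vmem P) => [->|[u0 u0P]]; first by rewrite cards0.
  have [b0 _] := priv u0 (fintype.subsetP sPU u0 u0P).
  pose pr u := odflt b0 [pick b | E u b && [forall a in U, E a b ==> (a == u)]].
  have prP : forall u, u \in U -> E u (pr u) && [forall a in U, E a (pr u) ==> (a == u)].
    move=> u uU; rewrite /pr; case: pickP => [b //|none].
    have [b hb] := priv u uU; by rewrite none in hb.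
  have inj : {in P &, injective pr}.
    move=> u v uP vP e.
    have /andP[_ /forallP /(_ u)] := prP v (fintype.subsetP sPU v vP).
    have /andP[eu _] := prP u (fintype.subsetP sPU u uP).
    by rewrite (fintype.subsetP sPU u uP) -e eu /= => /eqP.
  rewrite -(card_in_imset inj); apply: subset_leq_card; apply/fintype.subsetP => b.
  case/imsetP => u uP ->.
  have /andP[eu /forallP fa] := prP u (fintype.subsetP sPU u uP).
  have bN : pr u \in N by rewrite inE; apply/existsP; exists u; rewrite uP.
  rewrite inE bN /=.
  have -> : [set a in P | E a (pr u)] = [set u].
    apply/setP => a; rewrite !inE; apply/andP/eqP => [[aP ea]|->]; last by [].
    by move: (fa a); rewrite (fintype.subsetP sPU a aP) ea /= => /eqP.
  by rewrite cards1.
have : K * D * #|P| <= D * #|N|.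
  have : (K.-1 * D + 1) * #|P| + D.-1 * #|P| <= D * #|N|.
    apply: leq_trans bound; apply: leq_add.
      by apply: leq_mul => //; lia.
    by apply: leq_mul.
  case: D D0 hK {hD bound} => [|D'] // _ hK.
  case: K hK => [|K] hK /=; nia.
rewrite mulnAC [D * _]mulnC leq_pmul2r //.
Qed.


Local Open Scope ring_scope.

Lemma expR1_le3 (R : realType) : expR (1 : R) <= 3.
Proof.
have h1 : 1 - 6^-1 <= expR (- 6^-1 : R) := expR_ge1Dx _.
have h0 : expR (6^-1 : R) * expR (- 6^-1) = 1 by rewrite -expRD subrr expR0.
have hx0 := expR_ge0 (6^-1 : R).
have h2 : expR (6^-1 : R) <= 6 / 5 by nra.
have -> : (1 : R) = 6%:R * 6^-1 by rewrite mulfV.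
rewrite expRM_natl.
apply: (@le_trans _ _ ((6 / 5) ^+ 6)).
  by apply: lerXn2r; rewrite ?nnegrE //; lra.
rewrite !exprS expr0; lra.
Qed.

Lemma good_S (R : realType) (T1 T2 : finType) (E : T1 -> T2 -> bool) (n2 d2 : nat) :
  #|T2| = n2 -> (0 < n2)%N -> (forall b, #|[set a | E a b]| = d2) ->
  ln (2 * n2%:R : R) <= d2%:R ->
  exists g : {ffun T1 -> bool}, forall b : T2,
    (0 < #|[set a | E a b && g a]|)%N /\
    ((#|[set a | E a b && g a]|)%:R <= 4 * ln (2 * n2%:R : R)).
Proof.
move=> cT2 n2pos hd2 hL.
set L := ln (2 * n2%:R : R).
have n2R : (1 : R) <= n2%:R by rewrite ler1n.
have L0 : 0 < L by apply: ln_gt0; lra.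
have d2R : (0 : R) < d2%:R by apply: lt_le_trans hL.
set p := L / d2%:R.
have p0 : 0 < p by apply: divr_gt0.
have p1 : p <= 1 by rewrite ler_pdivrMr // mul1r.
have dp : d2%:R * p = L by rewrite /p mulrC divfK // gt_eqF.
have eL : expR (- L) = (2 * n2%:R)^-1.
  by rewrite expRN lnK // posrE; lra.
pose w (g : {ffun T1 -> bool}) := \prod_a (if g a then p else 1 - p).
have w0 : forall g, 0 <= w g.
  by move=> g; apply: prodr_ge0 => a _; case: (g a); lra.
have key : forall h : T1 -> bool -> R,
    \sum_g w g * \prod_a h a (g a) = \prod_a (p * h a true + (1 - p) * h a false).
  move=> h.
  transitivity (\prod_a \sum_(x : bool) (if x then p else 1 - p) * h a x); last first.
    by apply: eq_bigr => a _; rewrite big_bool.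
  rewrite bigA_distr_bigA; apply: eq_bigr => g _; by rewrite big_split.
have sw : \sum_g w g = 1.
  have := key (fun _ _ => 1).
  rewrite (eq_bigr (fun g => w g)) => [->|g _]; last by rewrite big1_eq mulr1.
  by rewrite big1 // => a _; rewrite !mulr1 addrC subrK.
pose deg (g : {ffun T1 -> bool}) b := #|[set a | E a b && g a]|.
have prodind : forall (g : {ffun T1 -> bool}) b (t : R), \prod_a (if E a b && g a then t else 1) = t ^+ deg g b.
  move=> g b t; rewrite -big_mkcond /=.
  rewrite (eq_bigl (fun a => a \in [set a | E a b && g a])) ?prodr_const // => a.
  by rewrite inE.
have Mt : forall b (t : R), \sum_g w g * t ^+ deg g b = (p * t + (1 - p)) ^+ d2.
  move=> b t.
  transitivity (\sum_g w g * \prod_a (if E a b && g a then t else 1)).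
    by apply: eq_bigr => g _; rewrite prodind.
  rewrite (key (fun a x => if E a b && x then t else 1)) -(hd2 b) -prodr_const [RHS]big_mkcond /=.
  apply: eq_bigr => a _.
  rewrite inE andbT andbF; case: (E a b); by rewrite ?mulr1 // addrC subrK.

have P0 : (1 - p) ^+ d2 <= (2 * n2%:R)^-1.
  rewrite -eL.
  apply: (@le_trans _ _ (expR (- p) ^+ d2)).
    apply: lerXn2r; rewrite ?nnegrE ?expR_ge0 //; first lra.
    exact: expR_ge1Dx.
  by rewrite -expRM_natl mulrN dp.
have he3 := expR1_le3 R.
set e := expR (1 : R) in he3 *.
have e1 : 1 <= e by rewrite /e -expR0 ler_expR.
have PM : (p * e + (1 - p)) ^+ d2 <= expR ((e - 1) * L).
  apply: (@le_trans _ _ (expR (p * (e - 1)) ^+ d2)).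
    apply: lerXn2r; rewrite ?nnegrE ?expR_ge0 //; first nra.
    have := expR_ge1Dx (p * (e - 1)); lra.
  by rewrite -expRM_natl mulrA dp mulrC.
pose bad (g : {ffun T1 -> bool}) :=
  [exists b, (deg g b == 0)%N || (4 * L < (deg g b)%:R)].
case: (boolP [exists g, ~~ bad g]) => [/existsP [g hg]|].
  exists g => b; move: hg; rewrite negb_exists => /forallP /(_ b).
  rewrite negb_or -leNgt => /andP[h1 h2]; split => //; by rewrite lt0n.
rewrite negb_exists => /forallP allbad.
pose F (g : {ffun T1 -> bool}) b := (0 : R) ^+ deg g b + e ^+ deg g b / expR (4 * L).
have F0 : forall g b, 0 <= F g b.
  move=> g b; apply: addr_ge0; first by rewrite expr0n; case: (_ == _).
  apply: divr_ge0; last exact: expR_ge0.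
  apply: exprn_ge0; lra.
have F1 : forall g, 1 <= \sum_b F g b.
  move=> g; have := allbad g; rewrite negbK => /existsP [b hb].
  rewrite (bigD1 b) //=; apply: (@le_trans _ _ (F g b)); last first.
    by rewrite lerDl; apply: sumr_ge0 => i _; exact: F0.
  case/orP: hb => [/eqP h0|hlt].
    rewrite /F h0 expr0 lerDl; apply: divr_ge0; last exact: expR_ge0.
    apply: exprn_ge0; lra.
  rewrite /F; apply: (@le_trans _ _ (e ^+ deg g b / expR (4 * L))); last first.
    by rewrite lerDr expr0n; case: (_ == _).
  rewrite ler_pdivlMr ?expR_gt0 // mul1r /e -expRM_natr mul1r ler_expR.
  exact: ltW.
have : \sum_g w g <= \sum_(b : T2) ((1 - p) ^+ d2 + (p * e + (1 - p)) ^+ d2 / expR (4 * L)).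
  apply: (@le_trans _ _ (\sum_g w g * \sum_b F g b)).
    by apply: ler_sum => g _; apply: ler_peMr.
  under eq_bigr do rewrite mulr_sumr.
  rewrite exchange_big /=; apply: ler_sum => b _.
  under eq_bigr do rewrite /F mulrDr mulrA.
  rewrite big_split /= -mulr_suml Mt Mt mulr0 add0r.
  done.
rewrite sw.
set x := (2 * n2%:R : R)^-1.
have hx : n2%:R * x = 2^-1 by rewrite /x invfM mulrCA mulfV ?mulr1 // gt_eqF //; lra.
have x0 : 0 <= x by rewrite /x invr_ge0; lra.
have hx2 : x <= 2^-1 by rewrite /x lef_pV2 ?posrE; lra.
have term : forall b : T2, (1 - p) ^+ d2 + (p * e + (1 - p)) ^+ d2 / expR (4 * L) <= x + x * x.
  move=> b; apply: lerD; first exact: P0.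
  rewrite ler_pdivrMr ?expR_gt0 //.
  apply: (le_trans PM).
  have -> : x * x * expR (4 * L) = expR (2 * L).
    rewrite /x -eL -!expRD; congr expR; lra.
  rewrite ler_expR; nra.
move=> h; have := le_trans h (ler_sum _ (fun b _ => term b)).
rewrite sumr_const.
rewrite (_ : #|xpredT| = n2); last by rewrite -cT2.
move=> H; have : 1 <= n2%:R * (x + x * x) by rewrite mulr_natl.
rewrite mulrDr mulrA hx => {}H.
exfalso; clear -H hx2; lra.
Qed.

Theorem lemma2p1 (R : realType) (T1 T2 : finType) (E : T1 -> T2 -> bool)
  (n1 n2 d1 d2 : nat) :
  #|T1| = n1 -> #|T2| = n2 ->
  (forall a : T1, #|[set b : T2 | E a b]| = d1) ->
  (forall b : T2, #|[set a : T1 | E a b]| = d2) ->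
  ln (2 * n2%:R : R) <= d2%:R ->
  exists f : T2 -> T1,
    star_cover E (d1%:R / (4 * ln (2 * n2%:R : R))) f.
Proof.
move=> cT1 cT2 hd1 hd2 hL.
case: (posnP n2) => [n20|n2pos].
  have emp : T2 -> False.
    move=> b; have := card0_eq (etrans cT2 n20) b; by rewrite !inE.
  exists (fun b => False_rect T1 (emp b)); split => [b|a [b _]]; case: (emp b).
have [g hg] := @good_S R T1 T2 E n2 d2 cT2 n2pos hd2 hL.
set L := ln (2 * n2%:R : R) in hg *.
have n2R : (1 : R) <= n2%:R by rewrite ler1n.
have L0 : 0 < L by apply: ln_gt0; lra.
set S := [set a | g a].
have degS : forall b, [set a in S | E a b] = [set a | E a b && g a].
  by move=> b; apply/setP => a; rewrite !inE andbC.
have [b0 _] : exists b0 : T2, b0 \in T2 by apply/card_gt0P; rewrite cT2.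
have [a0 Ea0] : exists a0 : T1, a0 \in [set a | E a b0 && g a].
  by apply/card_gt0P; case: (hg b0).
move: Ea0; rewrite inE => /andP[Ea0 ga0].
have d1pos : (0 < d1)%N.
  by rewrite -(hd1 a0); apply/card_gt0P; exists b0; rewrite inE.
pose D := (\max_b #|[set a in S | E a b]|)%N.
have hD : forall b, (#|[set a in S | E a b]| <= D)%N.
  by move=> b; rewrite /D; exact: leq_bigmax.
have D0 : (0 < D)%N.
  apply: leq_trans (hD b0); rewrite degS; by case: (hg b0).
have DL : (D%:R : R) <= 4 * L.
  have cpos : (0 < #|T2|)%N by rewrite cT2.
  rewrite /D; have [b1 ->] := bigop.eq_bigmax (fun b => #|[set a in S | E a b]|) cpos.
  by rewrite degS; case: (hg b1).
set k := d1%:R / (4 * L).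
have exK : exists n : nat, k <= n%:R.
  exists (Num.truncn k).+1; apply: ltW; apply: real_truncnS_gt; exact: num_real.
pose K := ex_minn exK.
have [hK1 hK2] : k <= K%:R /\ (forall m : nat, k <= m%:R -> (K <= m)%N).
  by rewrite /K; case: ex_minnP.
have KD : (K.-1 * D < d1)%N.
  case: K hK1 hK2 => [|K'] hK1 hK2 /=; first by rewrite mul0n.
  have lt : K'%:R < k.
    rewrite ltNge; apply/negP => /hK2; lia.
  rewrite -(ltr_nat R) natrM.
  have k4 : k * (4 * L) = d1%:R by rewrite /k divfK // gt_eqF //; lra.
  have K0 : (0 : R) <= K'%:R by [].
  have : K'%:R * D%:R <= K'%:R * (4 * L) :> R by apply: ler_wpM2l.
  rewrite -k4; move=> h; apply: (le_lt_trans h).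
  by rewrite ltr_pM2r //; lra.
pose dom (V : {set T1}) := [forall b, [exists a in V, E a b]].
have domS : (S \subset S) && dom S.
  rewrite subxx /=; apply/forallP => b; have [/card_gt0P [a]] := hg b.
  rewrite inE => /andP[eab gab] _; apply/existsP; exists a; by rewrite inE gab eab.
pose U := [arg min_(V < S | (V \subset S) && dom V) #|V|].
have [hU minU] : ((U \subset S) && dom U) /\
    (forall V : {set T1}, (V \subset S) && dom V -> (#|U| <= #|V|)%N).
  rewrite /U; case: arg_minnP => // V hV hmin; split => //.
have /andP[sUS domU] := hU.
have priv : forall u, u \in U -> exists b, E u b && [forall a in U, E a b ==> (a == u)].
  move=> u uU.
  case: (boolP [exists b, E u b && [forall a in U, E a b ==> (a == u)]]) => [/existsP //|/existsPn nopriv].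
  exfalso.
  have hV : (U :\ u \subset S) && dom (U :\ u).
    rewrite (fintype.subset_trans (subD1set U u) sUS) /=.
    apply/forallP => b; have /existsP [a /andP[aU eab]] := forallP domU b.
    case: (eqVneq a u) => [au|au]; last first.
      by apply/existsP; exists a; rewrite !inE au aU eab.
    subst a; have := nopriv b; rewrite eab /= => /forallPn [a'].
    rewrite !negb_imply => /andP[a'U /andP[ea' na']].
    by apply/existsP; exists a'; rewrite !inE na' a'U ea'.
  by have := minU _ hV; rewrite (cardsD1 u U) uU add1n ltnn.
pose A := finset.setX U [set: 'I_K].
pose r (x : T1 * 'I_K) (b : T2) := E x.1 b.
have hallc : forall B : {set T1 * 'I_K}, B \subset A -> (#|B| <= #|NC r [set: T2] B|)%N.
  move=> B sBA.
  pose P := [set x.1 | x in B].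
  have sPU : P \subset U.
    apply/fintype.subsetP => a /imsetP [x xB ->].
    by have := fintype.subsetP sBA x xB; rewrite inE => /andP[].
  have c1 : (#|B| <= #|P| * K)%N.
    have sB : B \subset finset.setX P [set: 'I_K].
      apply/fintype.subsetP => x xB; rewrite inE; apply/andP; split => //.
      by apply/imsetP; exists x.
    by have := subset_leq_card sB; rewrite cardsX cardsT card_ord.
  have c2 := @count_hall T1 T2 E d1 D K S U P hd1 (fun b => hD b) D0 KD sUS priv sPU.
  have c3 : [set b | [exists a in P, E a b]] \subset NC r [set: T2] B.
    apply/fintype.subsetP => b; rewrite !inE => /existsP [a /andP[/imsetP [x xB ->] ex]].
    by apply/existsP; exists x; rewrite xB.
  rewrite mulnC in c1; apply: leq_trans c1 (leq_trans c2 _).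
  exact: subset_leq_card c3.
have [gh [injg Pg]] := @hall _ T2 r b0 A [set: T2] hallc.
have hdomU : forall b, exists a, (a \in U) && E a b.
  move=> b; have /existsP [a /andP[aU eab]] := forallP domU b.
  by exists a; rewrite aU eab.
pose f (b : T2) : T1 := if [pick x in A | gh x == b] is Some x then x.1
                        else odflt a0 [pick a in U | E a b].
have fU : forall b, (f b \in U) && E (f b) b.
  move=> b; rewrite /f; case: pickP => [x /andP[xA /eqP <-]|_].
    have /andP[rx _] := Pg x xA.
    by move: xA; rewrite inE => /andP[-> _].
  case: pickP => [a /andP[aU eab]|none] /=; first by rewrite aU eab.
  have [a /andP[aU eab]] := hdomU b; by have := none a; rewrite aU eab.
exists f; split.
  by move=> b; have /andP[_ ->] := fU b.
move=> a [b fb].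
have aU : a \in U by rewrite -fb; have /andP[-> _] := fU b.
have fib : forall i : 'I_K, f (gh (a, i)) = a.
  move=> i; rewrite /f; case: pickP => [x /andP[xA /eqP e]|none].
    have aiA : (a, i) \in A by rewrite inE aU inE.
    by rewrite (injg _ _ xA aiA e).
  have aiA : (a, i) \in A by rewrite inE aU inE.
  by have := none (a, i); rewrite aiA eqxx.
apply: (le_trans hK1); rewrite ler_nat.
have inj : injective (fun i : 'I_K => gh (a, i)).
  move=> i j /= e.
  have aiA : (a, i) \in A by rewrite inE aU inE.
  have ajA : (a, j) \in A by rewrite inE aU inE.
  by have := injg _ _ aiA ajA e => -[].
have := card_imset (mem [set: 'I_K]) inj; rewrite cardsT card_ord => <-.
apply: subset_leq_card; apply/fintype.subsetP => b' /imsetP [i _ ->].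
by rewrite inE fib.
Qed.
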